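(* Let $\mathfrak{R}$ be either $\mathbb{F}_q$ ($q$ a prime power) or $\mathbb{Z}_k$ ($k\ge2$), with elements listed as $0=\omega_0,\omega_1,\dots,\omega_{|\mathfrak{R}|-1}$. Let $C$ and $D$ be $\mathfrak{R}$-linear codes of length $n$ and $\bm{w}\in\mathfrak{R}^n$. Then \[ \mathfrak{Jac}^{av}(C,D,\bm{w};x_c:c\in\mathfrak{R}^3) =\sum_{L,R,H}A_L^C\,B_R^{D,\bm{w}}\, \frac{\prod_{a=(a_1,a_2)\in\mathfrak{R}^2}\binom{R_a}{H_{(\omega_0,a_1,a_2)},\ldots,H_{(\omega_{|\mathfrak{R}|-1},a_1,a_2)}}}{\binom{n}{L_{\omega_0},\ldots,L_{\omega_{|\mathfrak{R}|-1}}}} \prod_{c\in\mathfrak{R}^3}x_c^{H_c}, \] where the sum runs over compositions $L$ of $n$, Jacobi compositions $R$ of $n$ and joint Jacobi compositions $H$ of $n$ such that $L_b=\sum_{(a_1,a_2)\in\mathfrak{R}^2}H_{(b,a_1,a_2)}$ for all $b\in\mathfrak{R}$ and $R_{(a_1,a_2)}=\sum_{b\in\mathfrak{R}}H_{(b,a_1,a_2)}$ for all $(a_1,a_2)\in\mathfrak{R}^2$.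
   Context: An $\mathbb{F}_q$-linear code of length $n$ is a subspace of $\mathbb{F}_q^n$; a $\mathbb{Z}_k$-linear code is an additive subgroup of $\mathbb{Z}_k^n$. For $\bm{u}\in\mathfrak{R}^n$, $\ell_a(\bm{u})=\#\{i:u_i=a\}$ ($a\in\mathfrak{R}$); for $\bm{u},\bm{w}$, $r_a(\bm{u};\bm{w})=\#\{i:(u_i,w_i)=a\}$ ($a\in\mathfrak{R}^2$); for $\bm{u},\bm{v},\bm{w}$, $h_a(\bm{u},\bm{v};\bm{w})=\#\{i:(u_i,v_i,w_i)=a\}$ ($a\in\mathfrak{R}^3$). A composition (resp. Jacobi composition, joint Jacobi composition) of $n$ is a vector of non-negative integers indexed by $\mathfrak{R}$ (resp. $\mathfrak{R}^2$, $\mathfrak{R}^3$) with entries summing to $n$. $A_L^C=\#\{\bm{u}\in C:\ell_a(\bm{u})=L_a\ \forall a\in\mathfrak{R}\}$ and $B_R^{D,\bm{w}}=\#\{\bm{v}\in D: r_a(\bm{v};\bm{w})=R_a\ \forall a\in\mathfrak{R}^2\}$. The complete joint Jacobi polynomial is $\mathfrak{Jac}(C,D,\bm{w};x_c:c\in\mathfrak{R}^3)=\sum_{\bm{u}\in C,\bm{v}\in D}\prod_{c\in\mathfrak{R}^3}x_c^{h_c(\bm{u},\bm{v};\bm{w})}$. For $\sigma\in S_n$, $\bm{u}^\sigma=(u_{\sigma(1)},\dots,u_{\sigma(n)})$, $C^\sigma=\{\bm{u}^\sigma:\bm{u}\in C\}$, and $\mathfrak{Jac}^{av}(C,D,\bm{w};x_c:c\in\mathfrak{R}^3)=\frac{1}{n!}\sum_{\sigma\in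 S_n}\mathfrak{Jac}(C^\sigma,D,\bm{w};x_c:c\in\mathfrak{R}^3)$. Multinomial coefficients: $\binom{m}{m_1,\dots,m_k}=\frac{m!}{m_1!\cdots m_k!}$. *)

(* Defs.v *)
From HB Require Import structures.
From mathcomp Require Import all_boot all_order all_algebra all_fingroup.
From mathcomp Require Import mpoly.
Set Implicit Arguments.
Unset Strict Implicit.
Unset Printing Implicit Defensive.
Import GRing.Theory.
Local Open Scope ring_scope.

Definition Fq_or_Zk (R : finComUnitRingType) : Prop :=
  (forall x : R, x != 0 -> x \is a GRing.unit) \/
  (exists k : nat, (1 < k)%N /\ exists f : {rmorphism 'Z_k -> R}, bijective f).

Definition linear_code (R : finComUnitRingType) (n : nat) (C : {set 'rV[R]_n}) : Prop :=
  (0 \in C) /\ (forall (a : R) (u v : 'rV[R]_n), u \in C -> v \in C -> a *: u + v \in C).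

Section Defs.
Variable R : finComUnitRingType.
Variable n : nat.

(* l_a(u), r_a(u;w), h_c(u,v;w) ; triples are written (b, (a1, a2)) *)
Definition ell (a : R) (u : 'rV[R]_n) : nat := #|[set i : 'I_n | u 0 i == a]|.
Definition rcnt (a : R * R) (u w : 'rV[R]_n) : nat :=
  #|[set i : 'I_n | (u 0 i, w 0 i) == a]|.
Definition hcnt (c : R * (R * R)) (u v w : 'rV[R]_n) : nat :=
  #|[set i : 'I_n | (u 0 i, (v 0 i, w 0 i)) == c]|.

Definition NV : nat := #|{: R * (R * R)}|.
Definition xvar (c : R * (R * R)) : {mpoly rat[NV]} := 'X_(enum_rank c).

Definition jac (C D : {set 'rV[R]_n}) (w : 'rV[R]_n) : {mpoly rat[NV]} :=
  \sum_(u in C) \sum_(v in D) \prod_(c : R * (R * R)) xvar c ^+ hcnt c u v w.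

Definition rvperm (s : 'S_n) (u : 'rV[R]_n) : 'rV[R]_n := \row_i u 0 (s i).
Definition code_perm (s : 'S_n) (C : {set 'rV[R]_n}) : {set 'rV[R]_n} :=
  [set rvperm s u | u in C].

Definition jac_av (C D : {set 'rV[R]_n}) (w : 'rV[R]_n) : {mpoly rat[NV]} :=
  ((n`!)%:R)^-1 *: \sum_(s : 'S_n) jac (code_perm s C) D w.

Definition A_coef (C : {set 'rV[R]_n}) (L : {ffun R -> 'I_n.+1}) : nat :=
  #|[set u in C | [forall a, ell a u == L a]]|.
Definition B_coef (D : {set 'rV[R]_n}) (w : 'rV[R]_n) (Rc : {ffun R * R -> 'I_n.+1}) : nat :=
  #|[set v in D | [forall a, rcnt a v w == Rc a]]|.
End Defs.

Definition is_comp (T : finType) (n : nat) (L : {ffun T -> 'I_n.+1}) : bool :=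
  (\sum_(t : T) (L t : nat))%N == n.

Definition mcoef (T : finType) (m : nat) (f : T -> nat) : rat :=
  (m`!)%:R / (\prod_(t : T) (f t)`!)%N%:R.

(* Main.v *)
Require Import Defs.
From HB Require Import structures.
From mathcomp Require Import all_boot all_order all_algebra all_fingroup.
From mathcomp Require Import mpoly.
From mathcomp Require Import zify ring.
Import GRing.Theory Num.Theory.
Local Open Scope ring_scope.

Section Count.
Variable B : finType.

Definition G (r : nat) (h : B -> nat) : rat :=
  if (\sum_b h b == r)%N then (r`!)%:R / ((\prod_b (h b)`!)%N)%:R else 0.

Lemma eq_G r f g : f =1 g -> G r f = G r g.
Proof.
by move=> fg; rewrite /G (eq_bigr _ (fun b _ => fg b)) (eq_bigr (fun b => (g b)`!) (fun b _ => congr1 _ (fg b))).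
Qed.

Lemma sub1_sum (h : B -> nat) b : (0 < h b)%N ->
  (\sum_b' h b' = (\sum_b' (h b' - (b' == b))).+1)%N.
Proof.
move=> hb; rewrite (bigD1 b) //= [X in _ = X.+1](bigD1 b) //= eqxx subn1.
have -> : (\sum_(i | i != b) (h i - (i == b)) = \sum_(i | i != b) h i)%N.
  by apply: eq_bigr => i /negbTE ->; rewrite subn0.
by rewrite -addSn prednK.
Qed.

Lemma prod_fact_sub (h : B -> nat) b : (0 < h b)%N ->
  ((\prod_b' (h b' - (b' == b))`!) * h b = \prod_b' (h b')`!)%N.
Proof.
move=> hb; rewrite (bigD1 b) //= [in RHS](bigD1 b) //= eqxx subn1.
have -> : (\prod_(i | i != b) (h i - (i == b))`! = \prod_(i | i != b) (h i)`!)%N.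
  by apply: eq_bigr => i /negbTE ->; rewrite subn0.
case: (h b) hb => // k _ /=; rewrite factS; lia.
Qed.

Lemma prod_fact_neq0 (h : B -> nat) : ((\prod_b (h b)`!)%N%:R : rat) != 0.
Proof.
by rewrite pnatr_eq0 -lt0n prodn_gt0 // => b; rewrite fact_gt0.
Qed.

Lemma G_rec r h : G r.+1 h =
  \sum_b (if (0 < h b)%N then G r (fun b' => h b' - (b' == b))%N else 0).
Proof.
rewrite /G; case: eqP => Hs.
- transitivity (\sum_b ((r`!)%:R * (h b)%:R / ((\prod_b (h b)`!)%N)%:R : rat)).
    rewrite -mulr_suml -mulr_sumr -natr_sum Hs factS natrM.
    by rewrite [((r.+1)%:R * _)]mulrC.
  apply: eq_bigr => b _; case: ifP => hb; last first.
    by move: hb; rewrite lt0n => /negbFE/eqP ->; rewrite mulr0 mul0r.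
  rewrite (sub1_sum _ _ hb) in Hs; case: Hs => ->; rewrite eqxx.
  rewrite -(prod_fact_sub _ _ hb) natrM.
  have h1 := prod_fact_neq0 (fun b' => h b' - (b' == b))%N.
  have h2 : ((h b)%:R : rat) != 0 by rewrite pnatr_eq0 -lt0n.
  by rewrite [X in _ / X]mulrC invfM mulrA mulfK.
- symmetry; apply: big1 => b _; case: ifP => // hb.
  case: eqP => // E; exfalso; apply: Hs; by rewrite (sub1_sum _ _ hb) E.
Qed.
End Count.
Arguments G {B} r h.
Arguments eq_G {B} r f g.
Arguments G_rec {B} r h.

Lemma sum_tupleS (T : finType) m (F : m.+1.-tuple T -> rat) :
  \sum_(t : m.+1.-tuple T) F t = \sum_(b : T) \sum_(t : m.-tuple T) F [tuple of b :: t].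
Proof.
rewrite pair_big /=.
apply: (reindex (fun p : T * m.-tuple T => [tuple of p.1 :: p.2])).
exists (fun t => (thead t, [tuple of behead t])) => [[b t] _|t _] /=.
  by congr pair; apply: val_inj.
by case: t / tupleP => b t; apply: val_inj.
Qed.

Lemma cond_cons (A B : finType) (H : A -> B -> nat) (c : A -> B -> nat) a0 b :
  [forall a, forall b', (((b, a0) == (b', a)) + c a b')%N == H a b'] =
  (0 < H a0 b)%N && [forall a, forall b', c a b' == (H a b' - ((a == a0) && (b' == b)))%N].
Proof.
case Hp: (0 < H a0 b)%N => /=.
  apply/forallP/forallP => X a; apply/forallP => b'; have := forallP (X a) b';
  rewrite xpair_eqE; case: (eqVneq a a0) => [->|na]; case: (eqVneq b' b) => [->|nb];
  rewrite ?eqxx /= ?andbF ?andFb ?andbT ?(eq_sym b) ?(eq_sym a0) ?(negbTE na) ?(negbTE nb) /=;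
  move/eqP => e; apply/eqP; lia.
apply/negbTE/negP => /forallP /(_ a0) /forallP /(_ b); rewrite !eqxx /=.
move/eqP; lia.
Qed.

Lemma count_tuples (A B : finType) m (s : m.-tuple A) (H : A -> B -> nat) :
  (\sum_(t : m.-tuple B | [forall a, forall b, count_mem (b, a) (zip t s) == H a b]) 1 : rat)
  = \prod_a G (count_mem a s) (H a).
Proof.
elim: m s H => [|m IH] s H.
  rewrite big_mkcond (big_pred1 [tuple]) => [|t]; last by apply/esym/eqP; exact: tuple0.
  rewrite (tuple0 s) /=.
  case: (boolP [forall a, forall b, 0%N == H a b]) => Hf.
    symmetry; apply: big1 => a _; rewrite /G.
    have Hz : forall b, H a b = 0%N by move=> b; apply/eqP; rewrite eq_sym; exact: (forallP (forallP Hf a) b).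
    rewrite (eq_bigr (fun _ => 0%N)) => [|b _]; last exact: Hz.
    rewrite big1_eq eqxx (eq_bigr (fun _ => 1%N)) => [|b _]; last by rewrite Hz.
    by rewrite big1_eq divr1.
  move/forallPn: Hf => [a /forallPn [b Hab]].
  rewrite (bigD1 a) //= /G; case: eqP => [/eqP|]; last by rewrite mul0r.
  rewrite sum_nat_eq0 => /forallP /(_ b) /=; rewrite eq_sym (negbTE Hab) //.
case: s / tupleP => a0 s'.
rewrite big_mkcond sum_tupleS /=.
rewrite (bigD1 a0) //= eqxx add1n G_rec mulr_suml.
apply: eq_bigr => b _.
rewrite (eq_bigr (fun t : m.-tuple B => if (0 < H a0 b)%N && [forall a, forall b', count_mem (b', a) (zip t s') == (H a b' - ((a == a0) && (b' == b)))%N] then 1 else 0)); last first.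
  by move=> t _; rewrite -cond_cons.
case: ifP => hb; last by rewrite mul0r; apply: big1 => t _.
rewrite -big_mkcond IH (bigD1 a0) //=.
congr (_ * _).
  by apply: eq_G => b'; rewrite eqxx.
apply: eq_bigr => a na; rewrite (negbTE na) /= eq_sym (negbTE na) add0n.
by apply: eq_G => b'; rewrite subn0.
Qed.

Lemma card_count (T : finType) (P : pred T) : count P (enum T) = #|[set x | P x]|.
Proof. rewrite cardsE cardE /enum_mem size_filter count_filter; apply: eq_count => x; by rewrite /= !inE andbT. Qed.

Lemma card_sum (T : finType) (P : pred T) : #|[set x | P x]| = (\sum_x (P x : nat))%N.
Proof.
rewrite -sum1_card big_mkcond /=; apply: eq_bigr => x _; rewrite inE; by case: (P x).
Qed.

Lemma card_split (T K : finType) (P : pred T) (g : T -> K) :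
  #|[set x | P x]| = (\sum_k #|[set x | P x && (g x == k)]|)%N.
Proof.
rewrite card_sum (eq_bigr (fun k => \sum_x (P x && (g x == k) : nat))%N); last by move=> k _; rewrite (card_sum _ (fun x => P x && (g x == k))).
rewrite exchange_big /=; apply: eq_bigr => x _.
rewrite (bigD1 (g x)) //= eqxx andbT big1 ?addn0 // => k nk.
by rewrite eq_sym (negbTE nk) andbF.
Qed.

Lemma count_rows (A B : finType) n (lab : 'I_n -> A) (H : A -> B -> nat) :
  (\sum_(u : 'rV[B]_n | [forall a, forall b, #|[set i | (u 0 i, lab i) == (b, a)]| == H a b]) 1 : rat)
  = \prod_a G #|[set i | lab i == a]| (H a).
Proof.
rewrite (eq_bigr (fun a => G (count_mem a [tuple lab i | i < n]) (H a))) => [|a _]; last first.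
  by rewrite /= count_map card_count.
rewrite -count_tuples.
rewrite (reindex (fun t : n.-tuple B => \row_i tnth t i)) /=; last first.
  exists (fun u : 'rV[B]_n => [tuple u 0 i | i < n]) => [t _|u _].
    by apply: eq_from_tnth => i; rewrite tnth_mktuple mxE.
  by apply/rowP => i; rewrite mxE tnth_mktuple.
apply: eq_bigl => t; apply: eq_forallb => a; apply: eq_forallb => b.
rewrite -[in RHS](map_tnth_enum t) /= zip_map count_map card_count.
congr (_ == _); apply: eq_card => i; rewrite !inE mxE //.
Qed.

Set Implicit Arguments.
Unset Strict Implicit.

Section Main.
Variable R : finComUnitRingType.
Variable n : nat.
Implicit Types (u v w : 'rV[R]_n).

Definition mono (H : R * (R * R) -> nat) : {mpoly rat[NV R]} := \prod_c xvar c ^+ H c.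
Definition hc u v w := fun c => hcnt c u v w.
Definition Fs u v w := \sum_(s : 'S_n) mono (hc (rvperm s u) v w).
Definition Lf u : {ffun R -> 'I_n.+1} := [ffun a => inord (ell a u)].
Definition Rf v w : {ffun R * R -> 'I_n.+1} := [ffun a => inord (rcnt a v w)].
Definition Hf u v w : {ffun R * (R * R) -> 'I_n.+1} := [ffun c => inord (hcnt c u v w)].

Lemma card_le_n (P : pred 'I_n) : (#|[set i | P i]| < n.+1)%N.
Proof. by rewrite ltnS; apply: leq_trans (max_card _) _; rewrite card_ord. Qed.

Lemma Lf_val u a : (Lf u a : nat) = ell a u.
Proof. by rewrite ffunE inordK // card_le_n. Qed.
Lemma Rf_val v w a : (Rf v w a : nat) = rcnt a v w.
Proof. by rewrite ffunE inordK // card_le_n. Qed.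
Lemma Hf_val u v w c : (Hf u v w c : nat) = hcnt c u v w.
Proof. by rewrite ffunE inordK // card_le_n. Qed.

Lemma rvpermM s t u : rvperm s (rvperm t u) = rvperm (s * t) u.
Proof. by apply/rowP => i; rewrite !mxE permM. Qed.

Lemma rvperm_inj s : injective (@rvperm R n s).
Proof.
move=> u u' E; apply/rowP => i; have := congr1 (fun x : 'rV[R]_n => x 0 (s^-1 i)%g) E.
by rewrite !mxE permKV.
Qed.

Lemma ell_rvperm s a u : ell a (rvperm s u) = ell a u.
Proof.
rewrite /ell -[RHS](card_preimset _ (@perm_inj _ s)); apply: eq_card => i.
by rewrite !inE mxE.
Qed.

Lemma Fs_perm t u v w : Fs (rvperm t u) v w = Fs u v w.
Proof.
rewrite /Fs; under eq_bigr do rewrite rvpermM.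
by rewrite [RHS](reindex_inj (mulIg t)).
Qed.

Lemma perm_exists u u' : (forall a, ell a u' = ell a u) -> exists t, u' = rvperm t u.
Proof.
move=> He.
have : perm_eq [tuple u' 0 i | i < n] [tuple u 0 i | i < n].
  apply/allP => x _; apply/eqP; rewrite /= !count_map -!enumT !card_count.
  rewrite /ell in He; rewrite -He; apply: eq_card => i; by rewrite !inE.
move/tuple_permP => [p Hp]; exists p.
have Ht : [tuple u' 0 i | i < n] = [tuple tnth [tuple u 0 i | i < n] (p i) | i < n].
  by apply: val_inj.
apply/rowP => i; have := congr1 (fun t => tnth t i) Ht.
by rewrite !tnth_mktuple mxE.
Qed.

Lemma ell_split u v w b : ell b u = (\sum_a hcnt (b, a) u v w)%N.
Proof.
rewrite /ell (card_split _ _ _ (fun i => (v 0 i, w 0 i))); apply: eq_bigr => a _.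
by rewrite /hcnt; apply: eq_card => i; rewrite !inE.
Qed.

Lemma sum_ell u : (\sum_a ell a u)%N = n.
Proof.
rewrite /ell (eq_bigr (fun k => #|[set x | predT x && (u 0 x == k)]|)) => [|k _]; last by apply: eq_card => i; rewrite !inE.
rewrite -card_split.
have -> : [set x : 'I_n | predT x] = setT by apply/setP => i; rewrite !inE.
by rewrite cardsT card_ord.
Qed.

Lemma sum_rcnt v w : (\sum_a rcnt a v w)%N = n.
Proof.
rewrite /rcnt (eq_bigr (fun k => #|[set x | predT x && ((v 0 x, w 0 x) == k)]|)) => [|k _]; last by apply: eq_card => i; rewrite !inE.
rewrite -card_split.
have -> : [set x : 'I_n | predT x] = setT by apply/setP => i; rewrite !inE.
by rewrite cardsT card_ord.
Qed.

End Main.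

Section Key.
Variable R : finComUnitRingType.
Variable n : nat.
Implicit Types (u v w : 'rV[R]_n).

Lemma G_mcoef (B : finType) r (h : B -> nat) : (\sum_b h b)%N = r -> G r h = mcoef r h.
Proof. by move=> e; rewrite /G e eqxx. Qed.

Lemma sumS_K u v w (K : {set 'rV[R]_n}) :
  (forall s u', (rvperm s u' \in K) = (u' \in K)) ->
  \sum_(u' in K) Fs u' v w = (n`!)%:R *: \sum_(u' in K) mono (hc u' v w).
Proof.
move=> HK; rewrite /Fs exchange_big /= scaler_nat -card_Sn -sumr_const.
apply: eq_bigr => s _.
rewrite [RHS](reindex_inj (@rvperm_inj R n s)) /=.
by apply: eq_bigl => u'; rewrite HK.
Qed.


Lemma Hf_eq u' v w (H : {ffun R * (R * R) -> 'I_n.+1}) :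
  (Hf u' v w == H) =
  [forall a, forall b, #|[set i | (u' 0 i, (v 0 i, w 0 i)) == (b, a)]| == (H (b, a) : nat)].
Proof.
apply/idP/idP => [/eqP <-|X]; first by apply/forallP => a; apply/forallP => b; rewrite Hf_val.
apply/eqP/ffunP => -[b a]; apply: ord_inj; rewrite Hf_val; exact/eqP/(forallP (forallP X a) b).
Qed.

Lemma count_H u v w (H : {ffun R * (R * R) -> 'I_n.+1}) :
  (\sum_(u' | (u' \in [set u' | [forall a, ell a u' == ell a u]]) && (Hf u' v w == H)) 1 : rat)
  = if [forall b, ell b u == \sum_a (H (b, a) : nat)]%N
    then \prod_a G (rcnt a v w) (fun b => (H (b, a) : nat)) else 0.
Proof.
case: ifP => HL.
  rewrite (eq_bigl (fun u' => Hf u' v w == H)); last first.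
    move=> u'; rewrite inE; case E: (Hf u' v w == H); rewrite ?andbF ?andbT //.
    apply/forallP => b; rewrite (ell_split u' v w b) (eqP (forallP HL b)).
    apply/eqP/eq_bigr => a _; rewrite -Hf_val (eqP E) //.
  rewrite (eq_bigl _ _ (fun u0 => Hf_eq u0 v w H)).
  exact: (@count_rows _ _ n (fun i => (v 0 i, w 0 i)) (fun a b => (H (b, a) : nat))).
apply: big_pred0 => u'; rewrite inE; apply/negbTE/negP => /andP [/forallP X /eqP E].
move/negbT: HL => /negP; apply; apply/forallP => b.
rewrite -(eqP (X b)) (ell_split u' v w b); apply/eqP/eq_bigr => a _.
by rewrite -E Hf_val.
Qed.


Lemma count_K u :
  (#|[set u' : 'rV[R]_n | [forall a, ell a u' == ell a u]]|%:R : rat)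
  = mcoef n (fun b => ell b u).
Proof.
rewrite -sum1_card natr_sum.
have := @count_rows unit R n (fun _ => tt) (fun _ b => ell b u).
rewrite (bigD1 tt) //= big_pred0_eq.
rewrite mulr1.
have -> : #|[set i : 'I_n | tt == tt]| = n.
  have -> : [set i : 'I_n | tt == tt] = setT by apply/setP => i; rewrite !inE.
  by rewrite cardsT card_ord.
rewrite (G_mcoef (sum_ell u)) => <-.
apply: eq_big => [u'|u' _ //]; rewrite inE.
apply/forallP/forallP => [X [] |X b]; last first.
  have := forallP (X tt) b; rewrite /ell; congr (_ == _); apply: eq_card => i.
  by rewrite !inE xpair_eqE eqxx andbT.
apply/forallP => b; have := X b; rewrite /ell; congr (_ == _); apply: eq_card => i.
by rewrite !inE xpair_eqE eqxx andbT.
Qed.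


Lemma eq_mcoef (T : finType) r (f g : T -> nat) : f =1 g -> mcoef r f = mcoef r g.
Proof. by move=> fg; rewrite /mcoef (eq_bigr (fun t => (g t)`!)) // => t _; rewrite fg. Qed.

Lemma key u v w : ((n`!)%:R : rat)^-1 *: Fs u v w =
  \sum_(H : {ffun R * (R * R) -> 'I_n.+1} | [&& is_comp H,
       [forall b : R, (Lf u b : nat) == (\sum_(a : R * R) (H (b, a) : nat))%N]
     & [forall a : R * R, (Rf v w a : nat) == (\sum_(b : R) (H (b, a) : nat))%N]])
   (((\prod_(a : R * R) mcoef (Rf v w a) (fun b : R => (H (b, a) : nat)))
         / mcoef n (fun b : R => (Lf u b : nat))) *: mono (fun c => H c)).
Proof.
pose K : {set 'rV[R]_n} := [set u' | [forall a, ell a u' == ell a u]].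
have HK : forall s u', (rvperm s u' \in K) = (u' \in K).
  by move=> s u'; rewrite !inE; apply: eq_forallb => a; rewrite ell_rvperm.
have cK := count_K u.
have K0 : (#|K|%:R : rat) != 0.
  by rewrite pnatr_eq0 -lt0n card_gt0; apply/set0Pn; exists u; rewrite inE; apply/forallP.
have h1 : \sum_(u' in K) Fs u' v w = #|K|%:R *: Fs u v w.
  rewrite scaler_nat -sumr_const; apply: eq_bigr => u'; rewrite inE => /forallP Hu.
  have [t ->] := perm_exists (fun a => eqP (Hu a)); exact: Fs_perm.
have h2 := sumS_K u v w HK.
have h3 : \sum_(u' in K) mono (hc u' v w) =
   \sum_(H : {ffun R * (R * R) -> 'I_n.+1}) (\sum_(u' | (u' \in K) && (Hf u' v w == H)) (1 : rat)) *: mono (fun c => H c).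
  rewrite (partition_big (fun u' => Hf u' v w) predT) //=; apply: eq_bigr => H _.
  rewrite scaler_suml; apply: eq_bigr => u' /andP [_ /eqP <-]; rewrite scale1r /mono /hc.
  by apply: eq_bigr => c _; rewrite Hf_val.
have nf0 : ((n`!)%:R : rat) != 0 by rewrite pnatr_eq0 -lt0n fact_gt0.
have main : Fs u v w = (#|K|%:R)^-1 *: ((n`!)%:R *: \sum_(u' in K) mono (hc u' v w)).
  by rewrite -h2 h1 scalerA mulVf // scale1r.
rewrite main h3 !scalerA mulrAC mulVf // mul1r scaler_sumr [RHS]big_mkcond /=.
apply: eq_bigr => H _; rewrite scalerA count_H cK.
have eL : [forall b, (Lf u b : nat) == (\sum_a (H (b, a) : nat))%N] =
          [forall b, ell b u == (\sum_a (H (b, a) : nat))%N].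
  by apply: eq_forallb => b; rewrite Lf_val.
rewrite eL.
case: (boolP [forall b, ell b u == (\sum_a (H (b, a) : nat))%N]) => HL; last first.
  by rewrite mulr0 scale0r andbF.
case: (boolP [forall a, (Rf v w a : nat) == (\sum_b (H (b, a) : nat))%N]) => HR; last first.
  rewrite !andbF; move/forallPn: HR => [a Ha].
  rewrite (bigD1 a) //= {1}/G; rewrite Rf_val eq_sym in Ha.
  by rewrite (negbTE Ha) mul0r mulr0 scale0r.
have -> : is_comp H.
  rewrite /is_comp; apply/eqP; apply: etrans _ (sum_ell u).
  have -> : (\sum_t (H t : nat))%N = (\sum_b \sum_a (H (b, a) : nat))%N by rewrite pair_big; apply: eq_bigr => -[].
  by apply: eq_bigr => b _; rewrite (eqP (forallP HL b)).
rewrite /= (@eq_mcoef _ n (fun b => (Lf u b : nat)) (fun b => ell b u)); last by move=> b; rewrite Lf_val.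
rewrite mulrC; congr (_ / _ *: _); apply: eq_bigr => a _.
by rewrite -Rf_val; apply: G_mcoef; rewrite (eqP (forallP HR a)).
Qed.

End Key.

Lemma fiber_sum (T K : finType) (X : {set T}) (f : T -> K) (P : pred K) (M : lmodType rat) (h : K -> M) :
  (forall x, P (f x)) -> \sum_(x in X) h (f x) = \sum_(k | P k) #|[set x in X | f x == k]|%:R *: h k.
Proof.
move=> Pf; rewrite (partition_big f P) //=; apply: eq_bigr => k _.
rewrite -sum1_card natr_sum scaler_suml.
apply: eq_big => [x|x /andP [_ /eqP ->]]; [by rewrite !inE | by rewrite scale1r].
Qed.

Unset Implicit Arguments.
Set Strict Implicit.

Theorem theorem4p5 (R : finComUnitRingType) (hR : Fq_or_Zk R) (n : nat)
  (C D : {set 'rV[R]_n}) (hC : linear_code C) (hD : linear_code D)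
  (w : 'rV[R]_n) :
  jac_av C D w =
  \sum_(L : {ffun R -> 'I_n.+1} | is_comp L)
   \sum_(Rc : {ffun R * R -> 'I_n.+1} | is_comp Rc)
    \sum_(H : {ffun R * (R * R) -> 'I_n.+1} |
          [&& is_comp H,
              [forall b : R, (L b : nat) == (\sum_(a : R * R) (H (b, a) : nat))%N]
            & [forall a : R * R, (Rc a : nat) == (\sum_(b : R) (H (b, a) : nat))%N]])
      (((A_coef C L * B_coef D w Rc)%N%:R
         * (\prod_(a : R * R) mcoef (Rc a) (fun b : R => (H (b, a) : nat)))
         / mcoef n (fun b : R => (L b : nat)))
       *: \prod_(c : R * (R * R)) xvar c ^+ H c).
Proof.
pose g (L : {ffun R -> 'I_n.+1}) (Rc : {ffun R * R -> 'I_n.+1}) :=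
  \sum_(H : {ffun R * (R * R) -> 'I_n.+1} |
          [&& is_comp H,
              [forall b : R, (L b : nat) == (\sum_(a : R * R) (H (b, a) : nat))%N]
            & [forall a : R * R, (Rc a : nat) == (\sum_(b : R) (H (b, a) : nat))%N]])
     (((\prod_(a : R * R) mcoef (Rc a) (fun b : R => (H (b, a) : nat)))
         / mcoef n (fun b : R => (L b : nat))) *: mono (fun c => H c)).
have step1 : jac_av C D w = \sum_(u in C) \sum_(v in D) g (Lf u) (Rf v w).
  rewrite /jac_av.
  have -> : \sum_(s : 'S_n) jac (code_perm s C) D w =
            \sum_(s : 'S_n) \sum_(u in C) \sum_(v in D) mono (hc (rvperm s u) v w).
    apply: eq_bigr => s _; rewrite /jac /code_perm big_imset //.
    by move=> x y _ _; apply: rvperm_inj.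
  rewrite exchange_big scaler_sumr; apply: eq_bigr => u _.
  rewrite exchange_big scaler_sumr; apply: eq_bigr => v _.
  exact: key.
have compL : forall u : 'rV[R]_n, is_comp (Lf u).
  by move=> u; rewrite /is_comp; under eq_bigr do rewrite Lf_val; rewrite sum_ell.
have compR : forall v : 'rV[R]_n, is_comp (Rf v w).
  by move=> v; rewrite /is_comp; under eq_bigr do rewrite Rf_val; rewrite sum_rcnt.
rewrite step1.
have stepv : forall L, \sum_(v in D) g L (Rf v w) =
   \sum_(Rc | is_comp Rc) (B_coef D w Rc)%:R *: g L Rc.
  move=> L; rewrite (@fiber_sum _ _ D (fun v => Rf v w) (@is_comp _ n) _ (fun Rc => g L Rc) compR).
  apply: eq_bigr => Rc _; congr (_%:R *: _); apply: eq_card => v; rewrite !inE.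
  congr (_ && _); apply/idP/idP => [/eqP <-|X]; first by apply/forallP => a; rewrite Rf_val.
  by apply/eqP/ffunP => a; apply: ord_inj; rewrite Rf_val; exact/eqP/(forallP X a).
under eq_bigr do rewrite stepv.
rewrite (@fiber_sum _ _ C (@Lf R n) (@is_comp _ n) _ (fun L => \sum_(Rc | is_comp Rc) (B_coef D w Rc)%:R *: g L Rc) compL).
apply: eq_bigr => L _; rewrite scaler_sumr; apply: eq_bigr => Rc _.
rewrite scalerA scaler_sumr; apply: eq_bigr => H _; rewrite scalerA mulrA -natrM.
congr ((_%:R * _ / _) *: _); congr (_ * _)%N.
apply: eq_card => u; rewrite !inE.
congr (_ && _); apply/idP/idP => [/eqP <-|X]; first by apply/forallP => a; rewrite Lf_val.
by apply/eqP/ffunP => a; apply: ord_inj; rewrite Lf_val; exact/eqP/(forallP X a).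
Qed.
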